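(* Let $F$ be a distribution on the nonnegative integers $\mathbf Z^+$ with unbounded support. Then $F\in\mathcal S_{\text{lattice}}(\hat\gamma)$ if and only if: (i) $\liminf_{x\to\infty}F\{x-1\}/F\{x\}\ge e^{\hat\gamma}$ (over integers $x$); and (ii) $F*F\{n\}\sim c\,F\{n\}$ as $n\to\infty$ for some $c\in(0,\infty)$.
   Context: $F\{n\}$ denotes the mass of $F$ at the point $n$. $\varphi(\gamma)=\sum_{n\ge0}e^{\gamma n}F\{n\}\in(0,\infty]$ and $\hat\gamma=\sup\{\gamma:\varphi(\gamma)<\infty\}$. For $\gamma\ge0$, a distribution $F$ on $\mathbf Z^+$ with unbounded support belongs to $\mathcal S_{\text{lattice}}(\gamma)$ if (i) $\varphi(\gamma)<\infty$; (ii) $F\{n+1\}/F\{n\}\to e^{-\gamma}$ as $n\to\infty$; (iii) $F*F\{n\}\sim 2\varphi(\gamma)F\{n\}$ as $n\to\infty$. *)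

(* Defs.v *)
From mathcomp Require Import all_boot all_order all_algebra.
From mathcomp Require Import all_classical all_reals all_analysis.
Set Implicit Arguments. Unset Strict Implicit. Unset Printing Implicit Defensive.
Import Order.TTheory GRing.Theory Num.Theory.
Import numFieldNormedType.Exports.
Local Open Scope classical_set_scope.
Local Open Scope ring_scope.

Section Defs.
Variable R : realType.

Definition is_distrib (F : nat -> R) : Prop :=
  (forall n, 0 <= F n) /\ ((fun N => \sum_(0 <= k < N) F k) @ \oo --> (1 : R)).

Definition unbounded_support (F : nat -> R) : Prop :=
  forall N, exists n, (N <= n)%N /\ 0 < F n.

Definition lconv (F G : nat -> R) (n : nat) : R :=
  \sum_(i < n.+1) F i * G (n - i)%N.

Definition phi (F : nat -> R) (g : R) : \bar R :=
  (\sum_(0 <= n <oo) (expR (g * n%:R) * F n)%:E)%E.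

Definition gamma_hat (F : nat -> R) : \bar R :=
  ereal_sup [set (g%:E)%E | g in [set g : R | (phi F g < +oo)%E]].

Definition asym_equiv (a b : nat -> R) : Prop :=
  (\forall n \near \oo, b n != 0) /\ ((fun n => a n / b n) @ \oo --> (1 : R)).

Definition S_lattice (g : R) (F : nat -> R) : Prop :=
  [/\ 0 <= g, unbounded_support F,
      (phi F g < +oo)%E,
      (fun n => F n.+1 / F n) @ \oo --> expR (- g)
    & asym_equiv (lconv F F) (fun n => 2 * fine (phi F g) * F n)].

End Defs.

(* Main.v *)
Require Import Defs.
From mathcomp Require Import all_boot all_order all_algebra.
From mathcomp Require Import all_classical all_reals all_analysis.
From mathcomp Require Import lra zify ring.
Import Order.TTheory GRing.Theory Num.Theory.
Import numFieldNormedType.Exports.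
Local Open Scope classical_set_scope.
Local Open Scope ring_scope.

Definition ev (P : nat -> Prop) := exists N, forall n, (N <= n)%N -> P n.

Lemma near_ev (P : nat -> Prop) : (\forall n \near \oo, P n) <-> ev P.
Proof.
split.
  by case=> N _ HN; exists N => n /HN.
by case=> N HN; exists N => // n /HN.
Qed.

Lemma ev_and P Q : ev P -> ev Q -> ev (fun n => P n /\ Q n).
Proof.
case=> N1 H1 [N2 H2]; exists (maxn N1 N2) => n.
by rewrite geq_max => /andP[/H1 ? /H2 ?].
Qed.

Lemma ev_ge P m : ev P -> ev (fun n => (m <= n)%N /\ P n).
Proof.
case=> N H; exists (maxn m N) => n; rewrite geq_max => /andP[? /H ?]; by split.
Qed.

Arguments ev_and {P Q}.
Arguments ev_ge {P}.

Section Sums.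
Variable R : realType.

Lemma tri_id (G : nat -> nat -> R) N :
  \sum_(0 <= n < N) \sum_(0 <= i < n.+1) G i (n - i)%N =
  \sum_(0 <= i < N) \sum_(0 <= j < N - i) G i j.
Proof.
elim: N => [|N IH]; first by rewrite !big_geq.
rewrite big_nat_recr //= IH.
rewrite [RHS]big_nat_recr //= subSn // subnn big_nat1.
rewrite [X in _ = X + _](_ : _ = \sum_(0 <= i < N) (\sum_(0 <= j < N - i) G i j + G i (N - i)%N)); last first.
  apply: eq_big_nat => i /andP[_ Hi].
  by rewrite subSn ?big_nat_recr //= ltnW.
by rewrite big_split /= -addrA [X in _ + X = _]big_nat_recr //= subnn.
Qed.


Lemma sum_widen_le (f : nat -> R) m n : (m <= n)%N -> (forall j, 0 <= f j) ->
  \sum_(0 <= j < m) f j <= \sum_(0 <= j < n) f j.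
Proof.
move=> mn f0; rewrite (big_cat_nat (leq0n m) mn) /= lerDl.
by apply: sumr_ge0 => j _.
Qed.

Lemma tri_le (G : nat -> nat -> R) N : (forall i j, 0 <= G i j) ->
  \sum_(0 <= n < N) \sum_(0 <= i < n.+1) G i (n - i)%N <=
  \sum_(0 <= i < N) \sum_(0 <= j < N) G i j.
Proof.
move=> G0; rewrite tri_id; apply: ler_sum_nat => i _.
by apply: sum_widen_le => //; apply: leq_subr.
Qed.

Lemma tri_ge (G : nat -> nat -> R) M : (forall i j, 0 <= G i j) ->
  \sum_(0 <= i < M) \sum_(0 <= j < M) G i j <=
  \sum_(0 <= n < M + M) \sum_(0 <= i < n.+1) G i (n - i)%N.
Proof.
move=> G0; rewrite tri_id.
have H1 : \sum_(0 <= i < M) \sum_(0 <= j < M) G i j <=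
          \sum_(0 <= i < M) \sum_(0 <= j < M + M - i) G i j.
  apply: ler_sum_nat => i /andP[_ Hi]; apply: sum_widen_le => //.
  move: Hi; clear; lia.
apply: (le_trans H1); apply: sum_widen_le; first exact: leq_addr.
move=> i; apply: sumr_ge0 => j _; exact: G0.
Qed.

Lemma sqr_sum (b : nat -> R) N :
  (\sum_(0 <= i < N) b i) ^+ 2 = \sum_(0 <= i < N) \sum_(0 <= j < N) (b i * b j).
Proof.
rewrite expr2 mulr_suml; apply: eq_bigr => i _; by rewrite mulr_sumr.
Qed.

End Sums.
Arguments tri_id {R}. Arguments tri_le {R}. Arguments tri_ge {R}.
Arguments sum_widen_le {R}. Arguments sqr_sum {R}.

Section Core.
Variable R : realType.

Lemma bernoulli_le (x : R) n : 0 <= x <= 1 -> 1 - n%:R * x <= (1 - x) ^+ n.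
Proof.
move=> /andP[x0 x1]; elim: n => [|n IH]; first by rewrite mul0r subr0 expr0.
rewrite exprS -natr1.
have h1 : 0 <= 1 - x by lra.
have h3 := ler_wpM2l h1 IH.
have h4 : 0 <= n%:R :> R by [].
rewrite mulrDl mul1r; nra.
Qed.

Definition cv (a : nat -> R) n := \sum_(0 <= i < n.+1) a i * a (n - i)%N.

Lemma chain (a : nat -> R) (th : R) n0 :
  0 <= th -> (forall m, (n0 <= m)%N -> th * a m.+1 <= a m) ->
  forall i n, (n0 + i <= n)%N -> th ^+ i * a n <= a (n - i)%N.
Proof.
move=> th0 H; elim=> [|i IH] n Hn; first by rewrite expr0 mul1r subn0.
have := IH n (ltac:(move: Hn; clear; lia)).
have Hm : (n0 <= n - i.+1)%N by move: Hn; clear; lia.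
have := H _ Hm.
have -> : (n - i.+1).+1 = (n - i)%N by move: Hn; clear; lia.
rewrite exprS -mulrA => h1 h2.
apply: le_trans h1; exact: ler_wpM2l.
Qed.

Lemma split_low (a : nat -> R) K n : (forall m, 0 <= a m) -> (K + K < n)%N ->
  2 * \sum_(0 <= i < K.+1) a i * a (n - i)%N <= cv a n.
Proof.
move=> a0 Kn; rewrite /cv.
have h0 : forall i, 0 <= a i * a (n - i)%N by move=> i; apply: mulr_ge0.
rewrite (@big_cat_nat _ _ _ K.+1 0 n.+1) //=; last by move: Kn; clear; lia.
rewrite mulr2n mulrDl mul1r lerD2l.
rewrite (@big_cat_nat _ _ _ (n - K) K.+1 n.+1) //=; try (move: Kn; clear; lia).
rewrite -[X in X <= _]add0r; apply: lerD; first by apply: sumr_ge0 => *.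
have -> : (n - K = 0 + (n - K))%N by [].
rewrite big_addn.
have -> : (n.+1 - (n - K) = K.+1)%N by move: Kn; clear; lia.
rewrite big_nat_rev /= add0n; apply: ler_sum_nat => i /andP[_ Hi].
have -> : (n - (K.+1 - i.+1) = i + (n - K))%N by move: Hi Kn; clear; lia.
have -> : (n - (i + (n - K)) = K.+1 - i.+1)%N by move: Hi Kn; clear; lia.
by rewrite mulrC.
Qed.


Lemma fatou (a : nat -> R) (c : R) : 0 < c -> (forall m, 0 <= a m) ->
  ev (fun n => 0 < a n) ->
  (forall eta, 0 < eta -> ev (fun n => cv a n <= (c + eta) * a n)) ->
  (forall th, 0 < th < 1 -> ev (fun n => th * a n.+1 <= a n)) ->
  forall K, 2 * \sum_(0 <= i < K.+1) a i <= c.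
Proof.
move=> c0 a0 Hpos Hup Hrat K.
set A := \sum_(0 <= i < K.+1) a i.
have A0 : 0 <= A by apply: sumr_ge0 => *.
rewrite leNgt; apply/negP => cA.
set d := 2 * A - c.
have d0 : 0 < d by rewrite /d; lra.
set x := d / (4 * (2 * A + 1) * K.+1%:R).
have den0 : 0 < 4 * (2 * A + 1) * K.+1%:R.
  by apply: mulr_gt0; [lra| rewrite ltr0n].
have x0 : 0 < x by apply: divr_gt0.
have hKx : 2 * A * (K%:R * x) <= d / 4.
  rewrite /x !mulrA ler_pdivrMr //.
  have hK : 0 <= K%:R :> R by [].
  rewrite -natr1; nra.
have x1 : x <= 1.
  rewrite /x ler_pdivrMr // mul1r.
  have hK : 1 <= K.+1%:R :> R by rewrite ler1n.
  have : d <= 2 * A + 1 by rewrite /d; lra.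
  nra.
set th := 1 - x.
have th0 : 0 < th.
  rewrite /th subr_gt0 /x ltr_pdivrMr // mul1r.
  have hK : 1 <= K.+1%:R :> R by rewrite ler1n.
  have : d <= 2 * A by rewrite /d; lra.
  nra.
have th1 : th < 1 by rewrite /th; lra.
have bern : 1 - K%:R * x <= th ^+ K by apply: bernoulli_le; rewrite ltW.
case: (ev_and (ev_and Hpos (Hup (d / 4) ltac:(lra))) (Hrat th ltac:(lra))) => N HN.
set n := (N + K + K + K).+1.
have [[an0 Hcv] _] := HN n (ltac:(rewrite /n; clear; lia)).
have Hr : forall m, (N <= m)%N -> th * a m.+1 <= a m by move=> m /HN [].
have Hch := @chain a th N (ltW th0) Hr.
have Hlow := @split_low a K n a0 (ltac:(rewrite /n; clear; lia) : (K + K < n)%N).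
have H2 : th ^+ K * A * a n <= \sum_(0 <= i < K.+1) a i * a (n - i)%N.
  rewrite /A mulr_sumr mulr_suml; apply: ler_sum_nat => i /andP[_ Hi].
  have h1 : th ^+ K <= th ^+ i by apply: ler_wiXn2l; rewrite ?ltW //; move: Hi; clear; lia.
  have h2 : th ^+ i * a n <= a (n - i)%N by apply: Hch; rewrite /n; move: Hi; clear; lia.
  have h3 : 0 <= th ^+ K by apply: exprn_ge0; rewrite ltW.
  have h4 := a0 i. have h5 := ltW an0.
  rewrite (mulrC (th ^+ K)) -mulrA; apply: ler_wpM2l => //.
  apply: le_trans h2; exact: ler_wpM2r.
have H3 : (c + d / 2) * a n <= th ^+ K * (2 * A) * a n.
  apply: ler_wpM2r; first exact: ltW.
  rewrite /d in hKx *; nra.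
have : (c + d / 2) * a n <= (c + d / 4) * a n.
  apply: le_trans Hcv; apply: le_trans H3 _; apply: le_trans Hlow.
  by rewrite mulrCA -mulrA; apply: ler_wpM2l => //; rewrite mulrA.
rewrite ler_pM2r //; lra.
Qed.

End Core.
Arguments cv {R}.
Arguments bernoulli_le {R}. Arguments chain {R}. Arguments split_low {R}. Arguments fatou {R}.

Section Heavy.
Variable R : realType.

Lemma expR_le12 (y : R) : 0 <= y <= 1/2 -> expR y <= 1 + 2 * y.
Proof.
move=> /andP[y0 y1].
have h1 := expR_ge1Dx (- y).
have h2 := expRxMexpNx_1 y.
have h3 := expR_ge0 y.
have h4 : expR y * (1 - y) <= 1.
  by rewrite -h2; apply: ler_wpM2l => //; lra.
nra.
Qed.

Lemma disc_ivt (W : nat -> R) (E L : R) N : 0 <= E -> W 0%N < L -> L < W N ->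
  (forall M, W M.+1 <= E * W M) -> exists M, L <= W M /\ W M <= E * L.
Proof.
move=> E0 W0 WN HW.
suff: forall M, W M < L \/ exists M, L <= W M /\ W M <= E * L.
  by case/(_ N) => //; move=> h; exfalso; lra.
elim=> [|M [IH|IH]]; [by left| |by right].
case: (lerP L (W M.+1)) => h; last by left.
right; exists M.+1; split => //.
apply: le_trans (HW M) _; apply: ler_wpM2l => //; exact: ltW.
Qed.

Lemma divMK (x y k : R) : 0 < y -> 0 < k -> x / (k * y) * y = x / k.
Proof. move=> y0 k0. field. apply/andP; split; apply/eqP; lra. Qed.

Lemma min_sub n i M : (i <= n)%N -> (minn n M <= minn i M + minn (n - i) M)%N.
Proof. move=> h; lia. Qed.


Lemma heavy (a : nat -> R) (c phi : R) :
  (forall m, 0 <= a m) ->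
  (forall eta, 0 < eta -> ev (fun n => (c - eta) * a n <= cv a n)) ->
  (forall N, \sum_(0 <= i < N) a i <= phi) ->
  (forall rho, 0 < rho -> exists N, phi - rho <= \sum_(0 <= i < N) a i) ->
  (forall s, 0 < s -> forall B, exists N, B < \sum_(0 <= n < N) a n * expR (s * n%:R)) ->
  c <= 2 * phi.
Proof.
move=> a0 Hlow Hphi Happ Hheavy.
have phi0 : 0 <= phi by have := Hphi 0%N; rewrite big_geq.
rewrite leNgt; apply/negP => cphi.
set del := (c - 2 * phi) / 2.
have del0 : 0 < del by rewrite /del; lra.
have [N1 HN1] := Hlow del del0.
have ecd : c - del = 2 * phi + del by rewrite /del; lra.
have HN1' : forall n, (N1 <= n)%N -> (2 * phi + del) * a n <= cv a n.
  by move=> n /HN1; rewrite ecd.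
clearbody del; clear HN1 ecd.
set rho := del ^+ 2 / (64 * (phi + 1)).
have rho0 : 0 < rho by apply: divr_gt0; [exact: exprn_gt0 | lra].
have erho : rho * (64 * (phi + 1)) = del ^+ 2.
  by rewrite /rho divfK //; apply/eqP; lra.
clearbody rho.
have hrho : 2 * phi * rho <= del ^+ 2 / 32 by nra.
have [M0 HM0] := Happ rho rho0.
set N0 := (N1 + M0 + M0)%N.
set C0 := \sum_(0 <= n < N0) cv a n.
have cv0 : forall n, 0 <= cv a n.
  by move=> n; apply: sumr_ge0 => i _; apply: mulr_ge0.
have HC0 : phi ^+ 2 - 2 * phi * rho <= C0.
  have h1 : (\sum_(0 <= i < M0) a i) ^+ 2 <= C0.
    have h := tri_ge (fun i j => a i * a j) M0 (fun i j => mulr_ge0 (a0 i) (a0 j)).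
    rewrite sqr_sum; apply: le_trans h _.
    by apply: sum_widen_le => //; rewrite /N0; clear; lia.
  have h2 : 0 <= \sum_(0 <= i < M0) a i by apply: sumr_ge0.
  case: (lerP rho phi) => hr; nra.
set Z := phi + del + 1.
have Z1 : 1 <= Z by rewrite /Z; lra.
have dZ : del <= Z by rewrite /Z; lra.
have hA0 : (2 * phi + del) * phi <= 2 * Z ^+ 2 by rewrite /Z; nra.
have hB0 : phi + del / 2 <= Z by rewrite /Z; lra.
clearbody Z.
set t := del ^+ 2 / (128 * Z ^+ 2).
have tZ : t * Z ^+ 2 = del ^+ 2 / 128.
  by rewrite /t divMK //; apply: exprn_gt0; lra.
have t0 : 0 < t by rewrite /t; apply: divr_gt0; [exact: exprn_gt0| apply: mulr_gt0; [lra | apply: exprn_gt0; lra]].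
clearbody t.
have t1 : t <= 1/128.
  have h1 : del ^+ 2 <= Z ^+ 2 by rewrite ler_sqr ?nnegrE; lra.
  have hZ2 : 1 <= Z ^+ 2 by rewrite expr2; nra.
  rewrite -(ler_pM2r (lt_le_trans ltr01 hZ2)) tZ; lra.
set s := t / N0.+1%:R.
have s0 : 0 < s by rewrite /s; apply: divr_gt0; rewrite ?ltr0n.
have st : s * N0.+1%:R = t by rewrite /s divfK // pnatr_eq0.
clearbody s.
have sN0 : s * N0%:R <= t.
  by rewrite -st; apply: ler_wpM2l; [exact: ltW | rewrite ler_nat].
have s_t : s <= t.
  rewrite -st -[X in X <= _]mulr1; apply: ler_wpM2l; [exact: ltW | by rewrite ler1n].
have sN00 : 0 <= s * N0%:R by apply: mulr_ge0; [exact: ltW | ].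
set X := expR (s * N0%:R).
have hX : X <= 1 + 2 * t.
  have h : 0 <= s * N0%:R <= 1/2 by apply/andP; split; lra.
  have := expR_le12 _ h; rewrite -/X; lra.
have hE : expR s <= 1 + 2 * t.
  have h : 0 <= s <= 1/2 by apply/andP; split; lra.
  have := expR_le12 _ h; lra.
have hA : (2 * phi + del) * phi * (2 * t) <= del ^+ 2 / 32 by nra.
have hB : 2 * t * (phi + del / 2) <= del / 4.
  have : t * Z <= del / 128 by nra.
  nra.
have X1 : 1 <= X by rewrite /X; apply: le_trans (expR_ge1Dx _); lra.
have hXs : forall n, (n <= N0)%N -> expR (s * n%:R) <= X.
  move=> n hn; rewrite /X ler_expR; apply: ler_wpM2l; first exact: ltW.
  by rewrite ler_nat.
clearbody X.
have [N' HN'] := Hheavy s s0 (phi + del / 2).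
set N := (N' + N0)%N.
set w := fun M n => expR (s * (minn n M)%:R).
have w1 : forall M n, 1 <= w M n.
  move=> M n; rewrite /w; apply: le_trans (expR_ge1Dx _).
  have : 0 <= s * (minn n M)%:R by apply: mulr_ge0; [exact: ltW|].
  lra.
have w0 : forall M n, 0 <= w M n by move=> M n; apply: le_trans (w1 M n).
set W := fun M => \sum_(0 <= n < N.+1) a n * w M n.
have W0 : W 0%N < phi + del / 2.
  have -> : W 0%N = \sum_(0 <= n < N.+1) a n.
    by apply: eq_bigr => n _; rewrite /w minn0 mulr0 expR0 mulr1.
  apply: le_lt_trans (Hphi N.+1) _; rewrite ltrDl; exact: divr_gt0.
have WN : phi + del / 2 < W N.
  apply: lt_le_trans HN' _.
  have -> : W N = \sum_(0 <= n < N.+1) a n * expR (s * n%:R).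
    apply: eq_big_nat => n /andP[_ Hn]; rewrite /w.
    by have -> : minn n N = n by move: Hn; clear; lia.
  apply: sum_widen_le; first by rewrite /N; clear; lia.
  by move=> j; apply: mulr_ge0 => //; exact: expR_ge0.
have WS : forall M, W M.+1 <= expR s * W M.
  move=> M; rewrite /W mulr_sumr; apply: ler_sum_nat => n _.
  rewrite mulrCA; apply: ler_wpM2l => //.
  rewrite /w -expRD ler_expR.
  have : ((minn n M.+1)%:R <= 1 + (minn n M)%:R :> R).
    by rewrite addrC natr1 ler_nat; clear; lia.
  have := s0; nra.
have [M [HM1 HM2]] := @disc_ivt W (expR s) (phi + del / 2) N (expR_ge0 s) W0 WN WS.
set U := W M.
rewrite -/U in HM1 HM2.
have Key : \sum_(0 <= n < N.+1) cv a n * w M n <= U ^+ 2.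
  have e1 : forall n, cv a n * w M n <=
      \sum_(0 <= i < n.+1) (a i * w M i) * (a (n - i)%N * w M (n - i)%N).
    move=> n; rewrite /cv mulr_suml; apply: ler_sum_nat => i /andP[_ Hi].
    have -> : a i * w M i * (a (n - i)%N * w M (n - i)%N) =
              a i * a (n - i)%N * (w M i * w M (n - i)%N) by ring.
    apply: ler_wpM2l; first by apply: mulr_ge0.
    rewrite /w -expRD ler_expR -mulrDr; apply: ler_wpM2l; first exact: ltW.
    rewrite -natrD ler_nat; apply: min_sub; move: Hi; clear; lia.
  apply: le_trans (ler_sum_nat (fun n _ => e1 n)) _.
  have h := tri_le (fun i j => (a i * w M i) * (a j * w M j)) N.+1
     (fun i j => mulr_ge0 (mulr_ge0 (a0 i) (w0 M i)) (mulr_ge0 (a0 j) (w0 M j))).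
  by apply: le_trans h _; rewrite /U /W sqr_sum.
have HN0N : (N0 <= N.+1)%N by rewrite /N; clear; lia.
have Low : C0 + (2 * phi + del) * (U - X * phi) <=
           \sum_(0 <= n < N.+1) cv a n * w M n.
  rewrite (big_cat_nat (leq0n N0) HN0N) /=.
  apply: lerD.
    apply: ler_sum_nat => n _; rewrite -[X in X <= _]mulr1.
    by apply: ler_wpM2l.
  have h1 : (2 * phi + del) * \sum_(N0 <= n < N.+1) a n * w M n <=
            \sum_(N0 <= n < N.+1) cv a n * w M n.
    rewrite mulr_sumr; apply: ler_sum_nat => n /andP[Hn _].
    rewrite mulrA; apply: ler_wpM2r => //; apply: HN1'.
    by move: Hn; rewrite /N0; clear; lia.
  apply: le_trans h1; apply: ler_wpM2l; first lra.
  have h2 : \sum_(0 <= n < N0) a n * w M n <= X * phi.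
    apply: le_trans (_ : X * \sum_(0 <= n < N0) a n <= _); last first.
      by apply: ler_wpM2l; [lra | exact: Hphi].
    rewrite mulr_sumr; apply: ler_sum_nat => n /andP[_ Hn].
    rewrite mulrC; apply: ler_wpM2r => //.
    rewrite /w; apply: le_trans (hXs (minn n M) _); first by [].
    by move: Hn; clear; lia.
  have : U = \sum_(0 <= n < N0) a n * w M n + \sum_(N0 <= n < N.+1) a n * w M n.
    by rewrite /U /W (big_cat_nat (leq0n N0) HN0N).
  lra.
have hU2 : U <= phi + 3 * del / 4.
  apply: le_trans HM2 _.
  have h1 : expR s * (phi + del / 2) <= (1 + 2 * t) * (phi + del / 2).
    by apply: ler_wpM2r => //; lra.
  apply: le_trans h1 _; move: hB; clear; move=> hB.
  rewrite mulrDl mul1r; lra.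
have hq : U ^+ 2 >= phi ^+ 2 - 2 * phi * rho + (2 * phi + del) * (U - X * phi) by lra.
have hX2 : (2 * phi + del) * phi * (X - 1) <= del ^+ 2 / 32.
  apply: le_trans hA; apply: ler_wpM2l; first by apply: mulr_ge0; lra.
  lra.
have hu : (U - phi) * (del - (U - phi)) >= del ^+ 2 / 8.
  move: HM1 hU2 del0; clear => HM1 hU2 del0.
  have h1 : 0 <= U - phi - del / 2 by lra.
  have h2 : 0 <= phi + 3 * del / 4 - U by lra.
  have h3 := mulr_ge0 h1 h2.
  have h4 : 0 < del * del by apply: mulr_gt0.
  rewrite expr2; nra.
have hd2 : 0 < del ^+ 2 by apply: exprn_gt0.
move: hq hX2 hu hrho hd2; clear => hq hX2 hu hrho hd2.
nra.
Qed.

End Heavy.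
Arguments heavy {R}.

Section Ratio.
Variable R : realType.

Lemma ratio_low (a : nat -> R) (phi : R) :
  (forall m, 0 <= a m) -> ev (fun n => 0 < a n) ->
  (forall eta, 0 < eta -> ev (fun n => cv a n <= (2 * phi + eta) * a n)) ->
  (forall th, 0 < th < 1 -> ev (fun n => th * a n.+1 <= a n)) ->
  (forall N, \sum_(0 <= i < N) a i <= phi) ->
  (forall rho, 0 < rho -> exists N, phi - rho <= \sum_(0 <= i < N) a i) ->
  (exists K, (0 < K)%N /\ 0 < a K) ->
  forall th', 0 < th' < 1 -> ev (fun n => th' * a n <= a n.+1).
Proof.
move=> a0 Hpos Hup Hrat Hphi Happ [K [K0 aK]] th' /andP[th'0 th'1].
set D := phi - a 0%N.
have D0 : 0 < D.
  have h1 : a 0%N + a K <= \sum_(0 <= i < K.+1) a i.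
    rewrite big_ltn // big_nat_recr /=; last by [].
    rewrite addrA lerD2r lerDl; exact: sumr_ge0.
  have := Hphi K.+1; rewrite /D; lra.
set sm := (1 + th') / 2.
set r := (1 + sm) / 2.
have hr2 : sm <= r * r by rewrite /r /sm; nra.
have r1 : r < 1 by rewrite /r /sm; lra.
have r0 : 0 < r by rewrite /r /sm; lra.
have sm1 : th' < sm by rewrite /sm; lra.
have esm : 2 * sm = 1 + th' by rewrite /sm; lra.
clearbody r sm.
have [N HN] := Happ ((1 - r) * D) (mulr_gt0 (ltac:(lra) : 0 < 1 - r) D0).
set K1 := N.
have HA : r * D <= \sum_(1 <= i < K1.+1) a i.
  have h1 : \sum_(0 <= i < N) a i <= \sum_(0 <= i < K1.+1) a i.
    by apply: sum_widen_le.
  have h2 : \sum_(0 <= i < K1.+1) a i = a 0%N + \sum_(1 <= i < K1.+1) a i.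
    by rewrite big_ltn.
  rewrite /D in HN *; lra.
set x := (1 - r) / K1.+1%:R.
have x0 : 0 < x by rewrite /x; apply: divr_gt0; [lra|rewrite ltr0n].
have hKx : K1%:R * x <= 1 - r.
  rewrite /x mulrA ler_pdivrMr ?ltr0n // -natr1.
  have : 0 <= K1%:R :> R by [].
  nra.
have x1 : x <= 1 - r.
  rewrite /x ler_pdivrMr ?ltr0n //.
  have : 1 <= K1.+1%:R :> R by rewrite ler1n.
  have : 0 < 1 - r by lra.
  nra.
set th := 1 - x.
have th0 : 0 < th by rewrite /th; lra.
have th1 : th < 1 by rewrite /th; lra.
have thK : r <= th ^+ K1.
  have := bernoulli_le x K1 (ltac:(apply/andP; split; lra)); rewrite -/th; lra.
clearbody th.
set eta := (1 - th') * D / 2.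
have eta0 : 0 < eta by rewrite /eta; apply: divr_gt0 => //; apply: mulr_gt0 => //; lra.
have [n0 Hn0] := Hrat th (ltac:(apply/andP; split; lra)).
have [n1 Hn1] := Hpos.
have [n2 Hn2] := Hup eta eta0.
exists (n0 + n1 + n2 + K1 + K1)%N => n Hn.
set m := n.+1.
have am : 0 < a m by apply: Hn1; rewrite /m; move: Hn; clear; lia.
have an : 0 < a n by apply: Hn1; move: Hn; clear; lia.
have Hcv : cv a m <= (2 * phi + eta) * a m by apply: Hn2; rewrite /m; move: Hn; clear; lia.
rewrite leNgt; apply/negP => bad.
have Hch := @chain R a th n0 (ltW th0) (fun k hk => Hn0 k hk).
have Hlow := @split_low R a K1 m a0 (ltac:(rewrite /m; move: Hn; clear; lia)).
have hS : a 0%N * a m + r * a n * \sum_(1 <= i < K1.+1) a i <=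
          \sum_(0 <= i < K1.+1) a i * a (m - i)%N.
  rewrite [X in _ <= X]big_ltn // subn0; apply: lerD => //.
  rewrite mulr_sumr; apply: ler_sum_nat => i /andP[i1 i2].
  rewrite (mulrC (r * a n)); apply: ler_wpM2l => //.
  have e : (m - i = n - i.-1)%N by rewrite /m; move: i1; clear; lia.
  rewrite e.
  have h1 : th ^+ i.-1 * a n <= a (n - i.-1)%N.
    by apply: Hch; move: Hn i2; clear; lia.
  have h2 : th ^+ K1 <= th ^+ i.-1.
    by apply: ler_wiXn2l; rewrite ?ltW //; move: i2; clear; lia.
  apply: le_trans h1; apply: ler_wpM2r; [exact: ltW | lra].
set S1 := \sum_(1 <= i < K1.+1) a i in HA hS.
have h1 : sm * D * a n <= r * a n * S1.
  have h := ler_wpM2l (mulr_ge0 (ltW r0) (ltW an)) HA.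
  have h' : sm * D * a n <= r * a n * (r * D).
    have := ler_wpM2r (mulr_ge0 (ltW D0) (ltW an)) hr2. 
    have e1 : sm * D * a n = sm * (D * a n) by ring.
    have e2 : r * a n * (r * D) = r * r * (D * a n) by ring.
    by rewrite e1 e2.
  exact: le_trans h' h.
have eD : phi = a 0%N + D by rewrite /D; lra.
clearbody D.
have h2 : 2 * sm * D * a n <= (2 * D + eta) * a m.
  rewrite eD in Hcv; move: Hcv Hlow hS h1; clear -a0; move=> Hcv Hlow hS h1; nra.
have h3 : (2 * D + eta) * a m < (2 * D + eta) * (th' * a n).
  by rewrite ltr_pM2l //; lra.
have h4 : 2 * sm * D < (2 * D + eta) * th'.
  have := lt_le_trans (le_lt_trans h2 h3) (lexx _).
  rewrite mulrA -!(mulrC (a n)) -!mulrA.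
  move=> hh; rewrite -(ltr_pM2l an); lra.
rewrite /eta esm in h4; move: h4 D0 th'0 th'1; clear => h4 D0 th'0 th'1.
have p := mulr_gt0 (mulr_gt0 (ltac:(lra) : 0 < 1 - th') D0) (ltac:(lra) : 0 < 2 - th').
nra.
Qed.

End Ratio.
Arguments ratio_low {R}.

Section Misc.
Variable R : realType.

Lemma nneseries_le_B (f : nat -> R) B : (forall n, 0 <= f n) ->
  (forall N, \sum_(0 <= n < N) f n <= B) ->
  (\sum_(0 <= n <oo) (f n)%:E <= B%:E)%E.
Proof.
move=> f0 HB; apply: lime_le.
  by apply: is_cvg_nneseries => n _ _; rewrite lee_fin.
by near=> N; rewrite sumEFin lee_fin.
Unshelve. all: by end_near.
Qed.

Lemma nneseries_ge_part (f : nat -> R) N : (forall n, 0 <= f n) ->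
  ((\sum_(0 <= n < N) f n)%:E <= \sum_(0 <= n <oo) (f n)%:E)%E.
Proof.
move=> f0; rewrite -sumEFin; apply: nneseries_lim_ge => n _ _; by rewrite lee_fin.
Qed.

Lemma einf_ev (u : (\bar R)^nat) r : (r%:E < limn_einf u)%E -> ev (fun n => (r%:E < u n)%E).
Proof.
rewrite limn_einf_lim (cvg_lim _ (@cvg_einfs_sup _ u)) //.
case/ereal_sup_gt => _ [n _ <-] h; exists n => k nk.
apply: lt_le_trans h _.
apply: ereal_inf_lbound; exists k => //.
Qed.

Lemma cvg_from_bounds (u : R^nat) l : 0 < l ->
  (forall th, 0 < th < 1 -> ev (fun n => th * l <= u n /\ th * u n <= l)) ->
  u @ \oo --> l.
Proof.
move=> l0 H; apply/cvgrPdist_lt => e e0.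
set x := e / (4 * l + 2 * e).
have ex : x * (4 * l + 2 * e) = e by rewrite /x divfK //; apply/eqP; lra.
have x0 : 0 < x by rewrite /x; apply: divr_gt0 => //; lra.
clearbody x.
have x1 : x < 1/2 by nra.
have [N HN] := H (1 - x) ltac:(apply/andP; split; lra).
near=> n.
have [h1 h2] : (1 - x) * l <= u n /\ (1 - x) * u n <= l by apply: HN; near: n; exists N.
have u0 : 0 < u n by nra.
have u2 : u n <= 2 * l by nra.
rewrite ltr_norml; apply/andP; split; nra.
Unshelve. all: by end_near.
Qed.

End Misc.
Arguments nneseries_le_B {R}. Arguments nneseries_ge_part {R}. Arguments einf_ev {R}. Arguments cvg_from_bounds {R}.

Section Tilt.
Variable R : realType.

Lemma lconv_cv (a : nat -> R) n : lconv a a n = cv a n.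
Proof. by rewrite /lconv /cv big_mkord. Qed.

Definition tilt (g : R) (F : nat -> R) n := expR (g * n%:R) * F n.

Lemma cv_tilt g F n : cv (tilt g F) n = expR (g * n%:R) * cv F n.
Proof.
rewrite /cv mulr_sumr; apply: eq_big_nat => i /andP[_ Hi].
rewrite /tilt.
have e : expR (g * i%:R) * expR (g * (n - i)%N%:R) = expR (g * n%:R).
  have Hin : (i <= n)%N by move: Hi; clear; lia.
  by rewrite -expRD -mulrDr natrB // addrC subrK.
rewrite -e; ring.
Qed.

Lemma tiltS g F n : tilt g F n.+1 = expR g * expR (g * n%:R) * F n.+1.
Proof. by rewrite /tilt -natr1 mulrDr mulr1 expRD (mulrC (expR (g * n%:R)) (expR g)). Qed.

Lemma term_le_cv (a : nat -> R) n i : (forall m, 0 <= a m) -> (i <= n)%N ->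
  a i * a (n - i)%N <= cv a n.
Proof.
move=> a0 Hi.
have Hi1 : (i <= n.+1)%N by move: Hi; clear; lia.
have Hi2 : (i < n.+1)%N by move: Hi; clear; lia.
rewrite /cv (big_cat_nat (leq0n i) Hi1) /= [X in _ <= _ + X]big_ltn //.
rewrite addrCA lerDl; apply: addr_ge0; apply: sumr_ge0 => j _; exact: mulr_ge0.
Qed.

End Tilt.
Arguments lconv_cv {R}. Arguments tilt {R}. Arguments cv_tilt {R}. Arguments tiltS {R}. Arguments term_le_cv {R}.

Section Main.
Variable R : realType.

Lemma phi_ge0 (F : nat -> R) g : (forall n, 0 <= F n) -> (0 <= phi F g)%E.
Proof.
move=> F0; apply: nneseries_ge0 => n _ _; rewrite lee_fin; apply: mulr_ge0 => //.
Qed.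

Lemma forward (F : nat -> R) g : (forall n, 0 <= F n) ->
  gamma_hat F = g%:E -> S_lattice g F ->
  ((expeR (gamma_hat F) <= limn_einf (fun n => ((F n / F n.+1)%:E)%E))%E /\
    (exists c : R, 0 < c /\ asym_equiv (lconv F F) (fun n => c * F n))).
Proof.
move=> F0 hg [g0 unb phifin hrat hasym]; split.
  have cv1 : (fun n => F n / F n.+1) @ \oo --> expR g.
    have h := cvgV (lt0r_neq0 (expR_gt0 (- g))) hrat.
    rewrite expRN invrK in h.
    suff -> : (fun n => F n / F n.+1) = unstable.inv_fun (fun n => F n.+1 / F n) by exact: h.
    by apply/funext => n; rewrite /unstable.inv_fun invf_div.
  have cv2 : (fun n => (F n / F n.+1)%:E) @ \oo --> (expR g)%:E.
    by apply: cvg_EFin => //; near=> n.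
  by rewrite hg /= (cvg_limn_einf_sup cv2).1.
exists (2 * fine (phi F g)); split => //.
have p0 := @phi_ge0 F g F0.
have f0 : 0 <= fine (phi F g) by apply: fine_ge0.
rewrite pmulr_rgt0 // lt_neqAle f0 andbT eq_sym; apply/eqP => e.
case: hasym => /near_ev [N HN] _.
by have := HN N (leqnn N); rewrite e mulr0 mul0r eqxx.
Unshelve. all: by end_near.
Qed.

End Main.

Section Back.
Variable R : realType.

Lemma backward (F : nat -> R) : is_distrib F -> unbounded_support F ->
  (expeR (gamma_hat F) <= limn_einf (fun n => ((F n / F n.+1)%:E)%E))%E ->
  (exists c : R, 0 < c /\ asym_equiv (lconv F F) (fun n => c * F n)) ->
  exists g : R, gamma_hat F = g%:E /\ S_lattice g F.
Proof.
move=> [F0 Fcv] unb hi [c [c0 hasym]].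
have Fpos : ev (fun n => 0 < F n).
  case: hasym => /near_ev [N HN] _; exists N => n /HN.
  by rewrite mulf_eq0 negb_or => /andP[_ h]; rewrite lt_neqAle eq_sym h F0.
have ConvF : forall eta, 0 < eta ->
    ev (fun n => (c - eta) * F n <= cv F n /\ cv F n <= (c + eta) * F n).
  move=> eta eta0.
  case: hasym => _ /cvgrPdist_lt /(_ (eta / c) (divr_gt0 eta0 c0)) /near_ev h.
  have [N HN] := ev_and Fpos h; exists N => n /HN [Fn0 hn].
  rewrite -lconv_cv.
  set q := lconv F F n / (c * F n) in hn.
  have eL : lconv F F n = q * c * F n.
    by rewrite /q -mulrA divfK // mulf_neq0 // lt0r_neq0.
  rewrite eL.
  move: hn; rewrite ltr_norml => /andP[h1 h2].
  have hc : eta / c * c = eta by rewrite divfK // lt0r_neq0.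
  have hq1 : c - eta <= q * c.
    have := ltr_pM2r c0 (1 - q) (eta / c); rewrite h2 hc => /esym hh; nra.
  have hq2 : q * c <= c + eta.
    have := ltr_pM2r c0 (- (eta / c)) (1 - q); rewrite h1 mulNr hc => /esym hh; nra.
  by split; apply: ler_wpM2r => //; exact: ltW.
have [K [K0 FK]] : exists K, (0 < K)%N /\ 0 < F K.
  by have [n [h1 h2]] := unb 1%N; exists n.
have part1 : forall N, \sum_(0 <= n < N) F n <= 1.
  move=> N.
  have nd : {homo (fun N => \sum_(0 <= k < N) F k) : n m / (n <= m)%N >-> n <= m}.
    by move=> m n mn; apply: sum_widen_le.
  have := nondecreasing_cvgn_le nd (cvgP _ Fcv) N.
  by rewrite (cvg_lim _ Fcv).
have phi0fin : (phi F 0 < +oo)%E.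
  apply: le_lt_trans (ltry 1).
  apply: nneseries_le_B => [n|N].
    by apply: mulr_ge0 => //; exact: expR_ge0.
  under eq_bigr => n _ do rewrite mul0r expR0 mul1r.
  exact: part1.
have gh0 : (0%:E <= gamma_hat F)%E by apply: ereal_sup_ubound; exists 0.
have ghub : forall t, (phi F t < +oo)%E -> (t%:E <= gamma_hat F)%E.
  by move=> t ht; apply: ereal_sup_ubound; exists t.
have ghfin : gamma_hat F != +oo%E.
  apply/eqP => ghy; rewrite ghy /= in hi.
  set M := (c + 1) / F K + 1.
  have M1 : 1 <= M by rewrite /M lerDr; apply: divr_ge0; lra.
  have hM : (M%:E < limn_einf (fun n => ((F n / F n.+1)%:E)%E))%E.
    by apply: lt_le_trans hi; exact: ltry.
  have [N HN] := ev_and (ev_and (einf_ev _ _ hM) Fpos) (ConvF 1 ltr01).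
  have Hr : forall m, (N <= m)%N -> M * F m.+1 <= F m.
    move=> m hm; have [[h1 _] _] := HN m hm.
    have [[_ h2] _] := HN m.+1 (leqW hm).
    by rewrite lte_fin ltr_pdivlMr // in h1; exact: ltW.
  have Hch := @chain R F M N (le_trans ler01 M1) Hr K (N + K)%N (leqnn _).
  have e : (N + K - K = N)%N by rewrite addnK.
  rewrite e in Hch.
  have [[_ hp] [_ hc]] := HN (N + K)%N (leq_addr _ _).
  have ht := @term_le_cv R F (N + K)%N K F0 (leq_addl _ _).
  rewrite e in ht.
  have MK : M <= M ^+ K by rewrite ler_eXnr.
  have h1 : F K * (M ^+ K * F (N + K)%N) <= (c + 1) * F (N + K)%N.
    apply: le_trans hc; apply: le_trans ht; by apply: ler_wpM2l => //; exact: ltW.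
  have h2 : F K * M = c + 1 + F K by rewrite /M mulrDr mulr1 mulrCA divff ?mulr1 // lt0r_neq0.
  have h3 : F K * M * F (N + K)%N <= F K * (M ^+ K * F (N + K)%N).
    by rewrite -mulrA; apply: ler_wpM2l; [exact: ltW | apply: ler_wpM2r; [exact: ltW|]].
  rewrite h2 in h3; nra.
set g := fine (gamma_hat F).
have hg : gamma_hat F = g%:E by rewrite /g fineK // ge0_fin_numE // lt_neqAle ghfin leey.
have g0 : 0 <= g by rewrite -lee_fin -hg.
clearbody g.
exists g; split => //.
set a := tilt g F.
have a0 : forall m, 0 <= a m by move=> m; apply: mulr_ge0 => //; exact: expR_ge0.
have apos : ev (fun n => 0 < a n).
  by case: Fpos => N HN; exists N => n /HN h; apply: mulr_gt0 => //; exact: expR_gt0.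
have ConvA : forall eta, 0 < eta ->
    ev (fun n => (c - eta) * a n <= cv a n /\ cv a n <= (c + eta) * a n).
  move=> eta eta0; case: (ConvF eta eta0) => N HN; exists N => n /HN [h1 h2].
  rewrite /a cv_tilt /tilt !(mulrCA _ (expR _)).
  by split; apply: ler_wpM2l => //; exact: expR_ge0.
have ConvU : forall eta, 0 < eta -> ev (fun n => cv a n <= (c + eta) * a n).
  by move=> eta /ConvA [N HN]; exists N => n /HN [].
have ConvL : forall eta, 0 < eta -> ev (fun n => (c - eta) * a n <= cv a n).
  by move=> eta /ConvA [N HN]; exists N => n /HN [].
rewrite hg /= in hi.
have RatA : forall th, 0 < th < 1 -> ev (fun n => th * a n.+1 <= a n).
  move=> th /andP[th0 th1].
  have h : ((th * expR g)%:E < limn_einf (fun n => ((F n / F n.+1)%:E)%E))%E.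
    apply: lt_le_trans hi; rewrite lte_fin gtr_pMl //; exact: expR_gt0.
  have [N HN] := ev_and (einf_ev _ _ h) Fpos.
  exists N => n hn; have [h1 _] := HN n hn; have [_ h2] := HN n.+1 (leqW hn).
  rewrite lte_fin ltr_pdivlMr // in h1.
  rewrite /a tiltS /tilt.
  have -> : th * (expR g * expR (g * n%:R) * F n.+1) =
            expR (g * n%:R) * (th * expR g * F n.+1) by ring.
  by apply: ler_wpM2l; [exact: expR_ge0 | exact: ltW].
have Hfat := @fatou R a c c0 a0 apos ConvU RatA.
have partial : forall N, \sum_(0 <= i < N) a i <= c / 2.
  case=> [|N]; first by rewrite big_geq //; apply: divr_ge0; lra.
  by have := Hfat N; lra.
have phiE : phi F g = (\sum_(0 <= n <oo) (a n)%:E)%E by [].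
have aE : forall n, a n = expR (g * n%:R) * F n by [].
have aS : forall n, a n.+1 = expR g * expR (g * n%:R) * F n.+1 by move=> n; rewrite /a tiltS.
clearbody a.
have phile : (phi F g <= (c / 2)%:E)%E by rewrite phiE; exact: nneseries_le_B.
have phifin : (phi F g < +oo)%E by apply: le_lt_trans phile (ltry _).
have phige0 : (0 <= phi F g)%E by rewrite phiE; apply: nneseries_ge0 => n _ _; rewrite lee_fin.
set ph := fine (phi F g).
have hph : phi F g = ph%:E by rewrite /ph fineK // ge0_fin_numE.
have Aph : forall N, \sum_(0 <= i < N) a i <= ph.
  by move=> N; have := nneseries_ge_part a N a0; rewrite -phiE hph lee_fin.
have Aapp : forall rho, 0 < rho -> exists N, ph - rho <= \sum_(0 <= i < N) a i.
  move=> rho rho0; case: (pselect (exists N, ph - rho <= \sum_(0 <= i < N) a i)) => // hn.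
  exfalso.
  have hB : forall N, \sum_(0 <= i < N) a i <= ph - rho.
    move=> N; case: (lerP (ph - rho) (\sum_(0 <= i < N) a i)) => h; last exact: ltW.
    by exfalso; apply: hn; exists N.
  have := nneseries_le_B a (ph - rho) a0 hB; rewrite -phiE hph lee_fin; lra.
have Hheavy : forall s, 0 < s -> forall B, exists N,
    B < \sum_(0 <= n < N) a n * expR (s * n%:R).
  move=> s s0 B; case: (pselect (exists N, B < \sum_(0 <= n < N) a n * expR (s * n%:R))) => // hn.
  exfalso.
  have hB : forall N, \sum_(0 <= n < N) a n * expR (s * n%:R) <= B.
    move=> N; case: (lerP (\sum_(0 <= n < N) a n * expR (s * n%:R)) B) => // h.
    by exfalso; apply: hn; exists N.
  have h0 : forall n, 0 <= a n * expR (s * n%:R) by move=> n; apply: mulr_ge0 => //; exact: expR_ge0.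
  have := nneseries_le_B _ B h0 hB.
  have -> : (\sum_(0 <= n <oo) (a n * expR (s * n%:R))%:E)%E = phi F (g + s).
    rewrite /phi; apply: eq_eseriesr => n _; congr (_%:E).
    by rewrite aE mulrDl expRD; ring.
  move=> hle.
  have := ghub (g + s) (le_lt_trans hle (ltry _)); rewrite hg lee_fin; lra.
have c2 : c <= 2 * ph := heavy a c ph a0 ConvL Aph Aapp Hheavy.
have c1 : 2 * ph <= c.
  rewrite leNgt; apply/negP => h.
  have [N HN] := Aapp ((2 * ph - c) / 4) ltac:(lra).
  have := partial N; lra.
have ec : c = 2 * ph by lra.
have aK : exists K, (0 < K)%N /\ 0 < a K.
  by exists K; split => //; rewrite aE; apply: mulr_gt0 => //; exact: expR_gt0.
have ConvU2 : forall eta, 0 < eta -> ev (fun n => cv a n <= (2 * ph + eta) * a n).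
  by rewrite -ec.
have Hlow := ratio_low a ph a0 apos ConvU2 RatA Aph Aapp aK.
split => //.
  apply: cvg_from_bounds; first exact: expR_gt0.
  move=> th hth.
  have [N HN] := ev_and (ev_and (RatA th hth) (Hlow th hth)) Fpos.
  exists N => n /HN [[h1 h2] hF].
  rewrite aS aE in h1 h2.
  have E0 : 0 < expR (g * n%:R) by exact: expR_gt0.
  have Eg : expR (- g) * expR g = 1 by rewrite mulrC expRxMexpNx_1.
  have eg0 : 0 < expR g by exact: expR_gt0.
  have emg0 : 0 < expR (- g) by exact: expR_gt0.
  have h1' : th * expR g * F n.+1 <= F n.
    rewrite -(ler_pM2l E0); move: h1; congr (_ <= _); ring.
  have h2' : th * F n <= expR g * F n.+1.
    rewrite -(ler_pM2l E0); move: h2; congr (_ <= _); ring.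
  split.
    rewrite ler_pdivlMr //.
    have := ler_wpM2l (ltW emg0) h2'.
    have -> : expR (- g) * (expR g * F n.+1) = F n.+1 by rewrite mulrA Eg mul1r.
    move=> hh; apply: le_trans hh; rewrite -mulrA mulrCA; exact: lexx.
  have := ler_wpM2l (ltW emg0) h1'.
  have e2 : expR (- g) * (th * expR g * F n.+1) = th * (expR (- g) * expR g) * F n.+1 by ring.
  rewrite e2 Eg mulr1 => hh.
  by rewrite mulrA ler_pdivrMr.
by rewrite -ec.
Qed.

End Back.

Theorem theorem8 (R : realType) (F : nat -> R) :
  is_distrib F -> unbounded_support F ->
  ((exists g : R, gamma_hat F = (g%:E)%E /\ S_lattice g F) <->
   ((expeR (gamma_hat F) <= limn_einf (fun n => ((F n / F n.+1)%:E)%E))%E /\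
    (exists c : R, 0 < c /\ asym_equiv (lconv F F) (fun n => c * F n)))).
Proof.
move=> hd unb; split.
  case=> g [hg hS]; apply: (@forward R F g _ hg hS); by case: hd.
by case=> hi hc; exact: (@backward R F hd unb hi hc).
Qed.
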